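(* Let $m\ge2$. There is a constant $C_m>0$ depending only on $m$ such that for every integer $N\ge2$ coprime to $m$, $$\tfrac13\operatorname{ord}_m(N)\le \operatorname{diam}\mathrm{Cay}\big(G_m/G_m(N),\{A,T\}\big)\le C_m\operatorname{ord}_m(N).$$ (One may take $C_m=2m(2+\log m)$.)
   Context: $G_m$ is the subgroup of $GL_2(\mathbb Z[1/m])$ of matrices $\begin{pmatrix} m^k & r\\ 0&1\end{pmatrix}$, $k\in\mathbb Z$, $r\in\mathbb Z[1/m]$, generated by $A=\begin{pmatrix}1&1\\0&1\end{pmatrix}$ and $T=\begin{pmatrix}m&0\\0&1\end{pmatrix}$. For $N$ coprime to $m$, $G_m(N)$ is the kernel of reduction modulo $N$, $G_m\to GL_2(\mathbb Z/N\mathbb Z)$, and $\operatorname{ord}_m(N)$ is the multiplicative order of $m$ modulo $N$. The Cayley graph is taken with respect to the images of $A^{\pm1},T^{\pm1}$. *)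

(* Defs.v *)
From HB Require Import structures.
From mathcomp Require Import all_boot all_order all_algebra.
Set Implicit Arguments. Unset Strict Implicit. Unset Printing Implicit Defensive.
Import Order.TTheory GRing.Theory Num.Theory.
Local Open Scope ring_scope.

(* Image of A = [[1,1],[0,1]] in GL_2(Z/NZ) (rows/columns indexed 0,1). *)
Definition Amx (N : nat) : 'M['Z_N]_2 :=
  \matrix_(i < 2, j < 2)
    (if (i == j :> nat) || ((i == 0 :> nat) && (j == 1 :> nat)) then 1 else 0).

(* Image of T = [[m,0],[0,1]] in GL_2(Z/NZ). *)
Definition Tmx (N m : nat) : 'M['Z_N]_2 :=
  \matrix_(i < 2, j < 2)
    (if i == j :> nat then (if i == 0 :> nat then m%:R else 1) else 0).

(* The symmetric generating set {A, A^-1, T, T^-1} of G_m / G_m(N),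
   viewed inside GL_2(Z/NZ) via reduction modulo N. *)
Definition gens (N m : nat) : seq 'M['Z_N]_2 :=
  [:: Amx N; invmx (Amx N); Tmx N m; invmx (Tmx N m)].

Definition is_word (N m : nat) (w : seq 'M['Z_N]_2) : bool :=
  all (fun g => g \in gens N m) w.
Arguments is_word : clear implicits.

Definition evalw (N : nat) (w : seq 'M['Z_N]_2) : 'M['Z_N]_2 :=
  \prod_(g <- w) g.

(* The Cayley
   graph is vertex-transitive with a symmetric generating set, so this is
   the graph diameter. *)
Definition is_cay_diam (N m d : nat) : Prop :=
  (forall w, is_word N m w ->
     exists2 w', is_word N m w' & evalw w' = evalw w /\ (size w' <= d)%N)
  /\ (exists2 w, is_word N m w &
        forall w', is_word N m w' -> evalw w' = evalw w -> (d <= size w')%N).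

Definition is_ord_mod (m N k : nat) : Prop :=
  (0 < k)%N /\ m ^ k = 1 %[mod N] /\
  (forall j, (0 < j)%N -> m ^ j = 1 %[mod N] -> (k <= j)%N).

(* Main.v *)
Require Import Defs.
From HB Require Import structures.
From mathcomp Require Import all_boot all_order all_algebra.
From mathcomp Require Import ring zify.
Import Order.TTheory GRing.Theory Num.Theory.
Local Open Scope ring_scope.
Set Implicit Arguments. Unset Strict Implicit.

Section Mats.
Variable N : nat.
Local Notation Z := 'Z_N.

Definition mk (a b : Z) : 'M[Z]_2 := \matrix_(i < 2, j < 2)
  (if (i == 0 :> nat) then (if (j == 0 :> nat) then a else b)
   else (if (j == 0 :> nat) then 0 else 1)).

Lemma mkM a b c d : mk a b * mk c d = mk (a * c) (a * d + b).
Proof.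
rewrite -mulmxE; apply/matrixP => i j; rewrite !mxE !big_ord_recl big_ord0 !mxE /=.
case: i => [[|[|//]] Hi]; case: j => [[|[|//]] Hj] /=; ring.
Qed.

Lemma mk_inj a b c d : mk a b = mk c d -> a = c /\ b = d.
Proof.
move=> E; split.
  by have := congr1 (fun M : 'M[Z]_2 => M ord0 ord0) E; rewrite !mxE.
by have := congr1 (fun M : 'M[Z]_2 => M ord0 ord_max) E; rewrite !mxE.
Qed.

Lemma mk1 : mk 1 0 = 1.
Proof.
apply/matrixP => i j; rewrite !mxE.
by case: i => [[|[|//]] Hi]; case: j => [[|[|//]] Hj].
Qed.

Lemma Amx_mk : Amx N = mk 1 1.
Proof.
apply/matrixP => i j; rewrite !mxE.
by case: i => [[|[|//]] Hi]; case: j => [[|[|//]] Hj].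
Qed.

Lemma Tmx_mk m : Tmx N m = mk m%:R 0.
Proof.
apply/matrixP => i j; rewrite !mxE.
by case: i => [[|[|//]] Hi]; case: j => [[|[|//]] Hj].
Qed.

Lemma invmx_mk a b : a \is a GRing.unit -> invmx (mk a b) = mk a^-1 (- (a^-1 * b)).
Proof.
move=> ua.
have E : mk a b *m mk a^-1 (- (a^-1 * b)) = 1%:M.
  rewrite mulmxE mkM mulrV // mulrN mulrA mulrV // mul1r addNr mk1 //.
have [U _] := mulmx1_unit E.
by rewrite -[RHS](mulKmx U) E mulmx1.
Qed.

End Mats.

Section Main.
Variables (N m k : nat).
Hypotheses (hN : (1 < N)%N) (hk : (0 < k)%N) (hmk : m ^ k = 1 %[mod N])
  (hmin : forall j, (0 < j)%N -> m ^ j = 1 %[mod N] -> (k <= j)%N).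
Local Notation Z := 'Z_N.
Let u : Z := m%:R.

Lemma natZ x y : ((x%:R : Z) = y%:R) <-> x = y %[mod N].
Proof.
split.
  by move/(congr1 val); rewrite !Zp_nat /= Zp_cast.
by move=> E; apply: val_inj; rewrite !Zp_nat /= Zp_cast.
Qed.

Lemma uX n : u ^+ n = (m ^ n)%:R.
Proof. by rewrite /u -natrX. Qed.

Lemma uk : u ^+ k = 1.
Proof. by rewrite uX; apply/(natZ _ 1). Qed.

Lemma uinv : u^-1 = u ^+ k.-1.
Proof. by apply: mulr1_eq; rewrite -exprS prednK // uk. Qed.

Lemma uU : u \is a GRing.unit.
Proof. by apply/unitrPr; exists (u ^+ k.-1); rewrite -exprS prednK // uk. Qed.

Lemma umod x : u ^+ x = u ^+ (x %% k).
Proof. by rewrite {1}(divn_eq x k) exprD mulnC exprM uk expr1n mul1r. Qed.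

Lemma u1 z : u ^+ z = 1 -> (z < k)%N -> z = 0%N.
Proof.
move=> E lt; case: (posnP z) => // zp.
have : (k <= z)%N; last by lia.
apply: hmin => //; apply/natZ; by rewrite -uX E.
Qed.

Lemma uinj x y : u ^+ x = u ^+ y -> (x %% k = y %% k)%N.
Proof.
rewrite (umod x) (umod y).
have : (x %% k < k)%N by rewrite ltn_mod.
have : (y %% k < k)%N by rewrite ltn_mod.
move: (x %% k)%N (y %% k)%N => a b ha hb.
wlog le : a b ha hb / (a <= b)%N.
  move=> H; case: (leqP a b) => [|/ltnW] l; first exact: H.
  by move=> /esym E; apply/esym; apply: H.
move=> E; have := subnKC le; move: (b - a)%N => z ez.
have : u ^+ z = 1.
  apply: (mulrI (unitrX a uU)); by rewrite -exprD ez mulr1 E.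
move/u1 => zz; have z0 : z = 0%N by apply: zz; lia.
by rewrite -ez z0 addn0.
Qed.

Lemma invA : invmx (Amx N) = mk 1 (-1).
Proof. by rewrite Amx_mk invmx_mk ?unitr1 // invr1 mul1r. Qed.

Lemma invT : invmx (Tmx N m) = mk (u ^+ k.-1) 0.
Proof. by rewrite Tmx_mk invmx_mk ?uU // -/u uinv mulr0 oppr0. Qed.

End Main.

Lemma evalw_cons N (g : 'M['Z_N]_2) w : evalw (g :: w) = g * evalw w.
Proof. by rewrite /evalw big_cons. Qed.
Lemma evalw_cat N (w1 w2 : seq 'M['Z_N]_2) : evalw (w1 ++ w2) = evalw w1 * evalw w2.
Proof. by rewrite /evalw big_cat. Qed.
Lemma evalw_nil N : evalw [::] = (1 : 'M['Z_N]_2).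
Proof. by rewrite /evalw big_nil. Qed.

Section Words.
Variables (N m k : nat).
Hypotheses (hN : (1 < N)%N) (hm : (1 < m)%N) (hk : (0 < k)%N) (hmk : m ^ k = 1 %[mod N])
  (hmin : forall j, (0 < j)%N -> m ^ j = 1 %[mod N] -> (k <= j)%N).
Local Notation Z := 'Z_N.
Let u : Z := m%:R.

Lemma word_form w : is_word N m w -> exists p q s,
  (p + q <= size w)%N /\ evalw w = mk (u ^+ (p + q * k.-1)) s.
Proof.
elim: w => [|g w IH] /=.
  by exists 0%N, 0%N, 0; rewrite evalw_nil expr0 mk1.
move=> /andP [gin /IH [p [q [s [le E]]]]].
rewrite evalw_cons E.
move: gin; rewrite /gens !inE => /or4P [] /eqP ->.
- rewrite Amx_mk mkM !mul1r; exists p, q, (s + 1); split => //; lia.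
- rewrite invA mkM !mul1r; exists p, q, (s - 1); split => //; lia.
- rewrite Tmx_mk mkM -/u addr0 -exprS; exists p.+1, q, (u * s); split => //; lia.
- rewrite (invT hN hk hmk) mkM -/u addr0 -exprD.
  exists p, q.+1, (u ^+ k.-1 * s); split; first lia.
  congr (mk (u ^+ _) _); rewrite mulSn; lia.
Qed.

Fixpoint digw (L r : nat) : seq 'M[Z]_2 :=
  if L is L'.+1 then nseq (r %% m)%N (Amx N) ++ Tmx N m :: digw L' (r %/ m)%N
  else [::].

Lemma evalw_nseqA c : evalw (nseq c (Amx N)) = mk 1 c%:R.
Proof.
elim: c => [|c IH] /=; first by rewrite evalw_nil mk1.
by rewrite evalw_cons IH Amx_mk mkM !mul1r natr1.
Qed.

Lemma evalw_nseqT c : evalw (nseq c (Tmx N m)) = mk (u ^+ c) 0.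
Proof.
elim: c => [|c IH] /=; first by rewrite evalw_nil expr0 mk1.
by rewrite evalw_cons IH Tmx_mk mkM -/u mulr0 addr0 -exprS.
Qed.

Lemma digw_eval L r : (r < m ^ L)%N -> evalw (digw L r) = mk (u ^+ L) r%:R.
Proof.
elim: L r => [|L IH] r /=.
  by rewrite expn0 ltnS leqn0 => /eqP ->; rewrite evalw_nil expr0 mk1.
move=> lr; rewrite evalw_cat evalw_cons evalw_nseqA Tmx_mk IH; last first.
  by rewrite ltn_divLR ?(ltnW hm) // -expnSr.
rewrite !mkM [in RHS](divn_eq r m) natrD natrM /u exprS.
congr (mk _ _); ring.
Qed.

Lemma gensA : Amx N \in gens N m. Proof. by rewrite /gens !inE eqxx. Qed.
Lemma gensT : Tmx N m \in gens N m. Proof. by rewrite /gens !inE eqxx ?orbT. Qed.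

Lemma digw_word L r : is_word N m (digw L r).
Proof.
elim: L r => [|L IH] r //=.
move: (IH (r %/ m)%N); rewrite /is_word all_cat all_nseq gensA orbT /= gensT => -> //.
Qed.

Lemma digw_size L r : (size (digw L r) <= L * m)%N.
Proof.
elim: L r => [|L IH] r //=.
rewrite size_cat size_nseq /= mulSn.
have := IH (r %/ m)%N; have : (r %% m < m)%N by rewrite ltn_mod (ltnW hm).
lia.
Qed.

Lemma Nle : (N <= m ^ k)%N.
Proof.
case: (leqP N (m ^ k)) => // lt.
have e : (m ^ k %% N = 1 %% N)%N := hmk.
rewrite modn_small // modn_small // in e.
have : (m <= m ^ k)%N by rewrite -{1}(expn1 m) leq_pexp2l // ltnW.
lia.
Qed.

Lemma upper w : is_word N m w ->
  exists2 w', is_word N m w' & evalw w' = evalw w /\ (size w' <= m.+1 * k)%N.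
Proof.
move=> /word_form [p [q [s [_ E]]]].
set x := (p + q * k.-1)%N in E.
exists (digw k (val s) ++ nseq (x %% k)%N (Tmx N m)).
  have := digw_word k (val s); rewrite /is_word all_cat => ->.
  by rewrite all_nseq gensT orbT.
split.
  rewrite evalw_cat digw_eval; last first.
    apply: leq_trans (ltn_ord s) _; by rewrite Zp_cast // Nle.
  rewrite evalw_nseqT mkM E -/u (uk hN hmk) mul1r mulr0 add0r natr_Zp.
  by rewrite -(umod hN hmk).
rewrite size_cat size_nseq.
have := digw_size k (val s); have : (x %% k < k)%N by rewrite ltn_mod hk.
rewrite mulSn; lia.
Qed.

Lemma lowerT a : (a < k)%N -> (2 * a <= k)%N -> forall w', is_word N m w' ->
  evalw w' = evalw (nseq a (Tmx N m)) -> (a <= size w')%N.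
Proof.
move=> ak a2 w' W E.
have [p [q [s [le E']]]] := word_form W.
rewrite evalw_nseqT E' in E.
have [E1 _] := mk_inj E.
have := uinj hN hk hmk hmin E1; rewrite (modn_small ak) => H.
case: (leqP a (p + q)) => [l|l]; first lia.
exfalso.
set x := (p + q * k.-1)%N in H.
have e0 : (x + q = p + q * k)%N.
  rewrite /x -[in RHS](prednK hk) mulnS; lia.
have e1 : (q * k + p = (x %/ k) * k + (a + q))%N.
  by have := divn_eq x k; rewrite H; lia.
have := congr1 (modn^~ k) e1; rewrite /= !modnMDl !modn_small //; lia.
Qed.

Lemma lowerA w' : is_word N m w' -> evalw w' = evalw [:: Amx N] -> (1 <= size w')%N.
Proof.
case: w' => [|//] _.
rewrite evalw_nil evalw_cons evalw_nil mulr1 Amx_mk -mk1 => /mk_inj [_ /eqP].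
by rewrite eq_sym oner_eq0.
Qed.

End Words.

From Stdlib Require Import Classical.

Lemma ex_min (P : nat -> Prop) n : P n ->
  exists d, P d /\ forall j, (j < d)%N -> ~ P j.
Proof.
elim/ltn_ind: n => n IH Pn.
case: (classic (exists j, (j < n)%N /\ P j)) => [[j [ljn Pj]]|H].
  exact: IH j ljn Pj.
by exists n; split=> // j ljn Pj; apply: H; exists j.
Qed.

Theorem lemma3p3 (m : nat) (hm : (2 <= m)%N) :
  exists C : rat, 0 < C /\
    forall N : nat, (2 <= N)%N -> coprime N m ->
      forall k : nat, is_ord_mod m N k ->
        exists d : nat, is_cay_diam N m d /\
          (k%:Q / 3 <= d%:Q) /\ (d%:Q <= C * k%:Q).
Proof.
exists (m.+1)%:Q; split; first by rewrite ltr0n.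
move=> N hN _ k [hk [hmk hmin]].
set P := fun d => forall w, is_word N m w ->
     exists2 w', is_word N m w' & evalw w' = evalw w /\ (size w' <= d)%N.
have P0 : P (m.+1 * k)%N by move=> w; apply: upper.
have [d [Pd dmin]] := ex_min P0.
have dle : (d <= m.+1 * k)%N.
  by case: (leqP d (m.+1 * k)) => // lt; case: (dmin _ lt P0).
have dk : (k <= 3 * d)%N.
  case: (ltnP 1 k) => k2.
    have a1 : (k %/ 2 < k)%N by lia.
    have a2 : (2 * (k %/ 2) <= k)%N by lia.
    have W : is_word N m (nseq (k %/ 2) (Tmx N m)).
      by rewrite /is_word all_nseq gensT orbT.
    have [w' W' [E' s']] := Pd _ W.
    have := lowerT hN hm hk hmk hmin a1 a2 W' E'; lia.
  have W : is_word N m [:: Amx N] by rewrite /is_word /= gensA.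
  have [w' W' [E' s']] := Pd _ W.
  have := lowerA W' E'; lia.
exists d; split; last split.
- split; first exact: Pd.
  case: d Pd dmin {dle dk} => [|d] Pd dmin.
    by exists [::] => //.
  have := dmin d (ltnSn d).
  move/not_all_ex_not => [w Hw0].
  have [Ww Hw] := imply_to_and _ _ Hw0.
  exists w => // w' W' E.
  case: (leqP d.+1 (size w')) => // lt.
  by exfalso; apply: Hw; exists w' => //; split.
- rewrite ler_pdivrMr ?ltr0n // -natrM ler_nat; lia.
- by rewrite -natrM ler_nat.
Qed.
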